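(* Let $\mathcal{L}$ be a Tarskian, Boolean logic, $K$ a theory, $\delta$ a choice function, $\mathcal{C}\subseteq K$ a cleaving, and $\pi:\mathbb{N}\to\mathcal{C}$ a bijection. Then the composition $\delta_\pi$, defined by $\delta_\pi(\varphi):=\delta(\varphi\lor\min_\pi(\varphi))$, is a choice function.
   Context: Logic $(\mathrm{Fm},\mathrm{Cn})$: countable $\mathrm{Fm}$; Tarskian: $\mathrm{Cn}$ monotone, extensive, idempotent; Boolean: there are $\neg,\lor$ with $\mathrm{Cn}(\{\varphi\})\cap\mathrm{Cn}(\{\neg\varphi\})=\mathrm{Cn}(\emptyset)$, $\mathrm{Cn}(\{\varphi,\neg\varphi\})=\mathrm{Fm}$, and usual $\lor$-introduction/elimination relative to $\mathrm{Cn}$; $\bot$ denotes a formula with $\mathrm{Cn}(\{\bot\})=\mathrm{Fm}$. $\varphi\equiv\psi$ iff $\mathrm{Cn}(\{\varphi\})=\mathrm{Cn}(\{\psi\})$. $\mathrm{CCT}$ = complete consistent theories; $\overline{\varphi}:=\{X\in\mathrm{CCT}\mid\varphi\notin X\}$. A choice function is $\delta:\mathrm{Fm}\to\mathcal{P}(\mathrm{CCT})$ with (CF1) $\delta(\varphi)\neq\emptyset$; (CF2) if $\varphi\notin\mathrm{Cn}(\emptyset)$ then $\delta(\varphi)\subseteq\overline{\varphi}$; (CF3) $\varphi\equiv\psi$ implies $\delta(\varphi)=\delta(\psi)$. A cleaving is an infinite set $\mathcal{C}$ of formulae with, for distinct $\varphi,\psi\in\mathcal{C}$, $\varphi\not\equiv\psi$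 and $\varphi\lor\psi\in\mathrm{Cn}(\emptyset)$. $\min_\pi(\varphi):=\pi(i)$ for the least $i\in\mathbb{N}$ with $\overline{\varphi}\cap\overline{\pi(i)}\neq\emptyset$, and $\min_\pi(\varphi):=\bot$ if no such $i$ exists. *)

(* Defs.v *)
From Stdlib Require Import Classical ClassicalEpsilon List.

Set Implicit Arguments.
Unset Strict Implicit.

Section Logic.
Variable Fm : Type.
Variable Cn : (Fm -> Prop) -> (Fm -> Prop).
Variable neg : Fm -> Fm.
Variable or : Fm -> Fm -> Fm.

Definition emptyF : Fm -> Prop := fun _ => False.
Definition single (p : Fm) : Fm -> Prop := fun x => x = p.
Definition pair (p q : Fm) : Fm -> Prop := fun x => x = p \/ x = q.
Definition addF (X : Fm -> Prop) (p : Fm) : Fm -> Prop := fun x => X x \/ x = p.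
Definition sub (X Y : Fm -> Prop) : Prop := forall x, X x -> Y x.
Definition seteq (X Y : Fm -> Prop) : Prop := forall x, X x <-> Y x.

Definition countable_fm : Prop := exists f : Fm -> nat, forall x y, f x = f y -> x = y.

Definition tarskian : Prop :=
  (forall X, sub X (Cn X)) /\
  (forall X Y, sub X Y -> sub (Cn X) (Cn Y)) /\
  (forall X, seteq (Cn (Cn X)) (Cn X)).

Definition boolean : Prop :=
  (forall p, seteq (fun x => Cn (single p) x /\ Cn (single (neg p)) x) (Cn emptyF)) /\
  (forall p, seteq (Cn (pair p (neg p))) (fun _ => True)) /\
  (forall X p q, Cn X p -> Cn X (or p q)) /\
  (forall X p q, Cn X q -> Cn X (or p q)) /\
  (forall X p q r, Cn (addF X p) r -> Cn (addF X q) r -> Cn (addF X (or p q)) r).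

Definition is_bot (b : Fm) : Prop := seteq (Cn (single b)) (fun _ => True).

Definition equivF (p q : Fm) : Prop := seteq (Cn (single p)) (Cn (single q)).

Definition theory (X : Fm -> Prop) : Prop := seteq (Cn X) X.

Definition CCT (X : Fm -> Prop) : Prop :=
  theory X /\ (exists x, ~ X x) /\ (forall p, X p \/ X (neg p)).

Definition over (p : Fm) (X : Fm -> Prop) : Prop := CCT X /\ ~ X p.

Definition choice_function (d : Fm -> (Fm -> Prop) -> Prop) : Prop :=
  (forall p X, d p X -> CCT X) /\               (* d : Fm -> P(CCT) *)
  (forall p, exists X, d p X) /\
  (forall p, ~ Cn emptyF p -> forall X, d p X -> over p X) /\
  (forall p q, equivF p q -> forall X, d p X <-> d q X).

Definition cleaving (C : Fm -> Prop) : Prop :=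
  (~ exists l : list Fm, forall x, C x -> In x l) /\
  (forall p q, C p -> C q -> p <> q -> ~ equivF p q /\ Cn emptyF (or p q)).

Definition bijection_onto (pi : nat -> Fm) (C : Fm -> Prop) : Prop :=
  (forall n, C (pi n)) /\
  (forall m n, pi m = pi n -> m = n) /\
  (forall p, C p -> exists n, pi n = p).

Definition meets (p q : Fm) : Prop := exists X, over p X /\ over q X.

Definition min_pi_spec (pi : nat -> Fm) (bot p r : Fm) : Prop :=
  (exists i, meets p (pi i) /\ (forall j, j < i -> ~ meets p (pi j)) /\ r = pi i)
  \/ ((forall i, ~ meets p (pi i)) /\ r = bot).

Definition min_pi (pi : nat -> Fm) (bot p : Fm) : Fm :=
  epsilon (inhabits bot) (min_pi_spec pi bot p).

Definition delta_pi (d : Fm -> (Fm -> Prop) -> Prop) (pi : nat -> Fm) (bot : Fm)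
  : Fm -> (Fm -> Prop) -> Prop :=
  fun p => d (or p (min_pi pi bot p)).

End Logic.

(* Main.v *)
Require Import Defs.
From Stdlib Require Import Classical ClassicalEpsilon List FunctionalExtensionality PropExtensionality Lia.

Section H.
Variable Fm : Type.
Variable Cn : (Fm -> Prop) -> (Fm -> Prop).
Variable neg : Fm -> Fm.
Variable or : Fm -> Fm -> Fm.
Hypothesis Htar : tarskian Cn.
Hypothesis Hbool : boolean Cn neg or.

Lemma cut (A B : Fm -> Prop) x : Cn A x -> sub A (Cn B) -> Cn B x.
Proof.
  destruct Htar as [Hext [Hmon Hid]]. intros H1 H2.
  apply (Hid B). exact (Hmon _ _ H2 x H1).
Qed.

Lemma th_in (X : Fm -> Prop) x : theory Cn X -> Cn X x -> X x.
Proof. intros H1 H2. apply H1; exact H2. Qed.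

Lemma addF_empty_single x : sub (addF (@emptyF Fm) x) (Cn (single x)).
Proof.
  destruct Htar as [Hext _]. intros y [[]| ->]. apply Hext. reflexivity.
Qed.

Lemma equiv_theory p q X : equivF Cn p q -> theory Cn X -> X p -> X q.
Proof.
  destruct Htar as [Hext _]. intros He HX Hp.
  apply th_in; auto. apply (cut (single p)).
  - apply He. apply Hext. reflexivity.
  - intros y ->. apply Hext. exact Hp.
Qed.

Lemma or_prime X p q : CCT Cn neg X -> X (or p q) -> X p \/ X q.
Proof.
  destruct Htar as [Hext [Hmon Hid]].
  destruct Hbool as [_ [Hpn [_ [_ Helim]]]].
  intros [HX [[z Hz] Hc]] Hor.
  destruct (Hc p) as [H|Hnp]; auto. destruct (Hc q) as [H|Hnq]; auto.
  exfalso. apply Hz. apply th_in; auto.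
  assert (Hall : Cn (addF X (or p q)) z).
  { apply Helim.
    - apply (cut (pair p (neg p))). apply Hpn; exact I.
      intros y [->| ->]; apply Hext; [right|left]; auto.
    - apply (cut (pair q (neg q))). apply Hpn; exact I.
      intros y [->| ->]; apply Hext; [right|left]; auto. }
  apply (cut _ _ _ Hall). intros y [Hy| ->]; apply Hext; auto.
Qed.

Lemma cn_or_equiv p q m : equivF Cn p q -> Cn (single (or q m)) (or p m).
Proof.
  destruct Htar as [Hext [Hmon Hid]].
  destruct Hbool as [_ [_ [Hi1 [Hi2 Helim]]]].
  intros He.
  apply (cut (addF (@emptyF Fm) (or q m))).
  - apply Helim.
    + apply Hi1. apply (cut (single q)). apply He. apply Hext. reflexivity.
      intros y ->. apply Hext. right. reflexivity.
    + apply Hi2. apply Hext. right. reflexivity.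
  - apply addF_empty_single.
Qed.

End H.
Arguments cut {Fm Cn} Htar A B x.
Arguments or_prime {Fm Cn neg or} Htar Hbool X p q.
Arguments cn_or_equiv {Fm Cn neg or} Htar Hbool p q m.
Arguments addF_empty_single {Fm Cn} Htar x.
Arguments th_in {Fm Cn} X x.
Arguments equiv_theory {Fm Cn} Htar p q X.

Lemma least_exists (P : nat -> Prop) n : P n -> exists i, P i /\ forall j, j < i -> ~ P j.
Proof.
  intros Hn. apply NNPP. intros Hno.
  assert (forall k, forall j, j < k -> ~ P j).
  { induction k. intros j Hj. inversion Hj.
    intros j Hj Pj. assert (Hor : j < k \/ j = k) by lia. destruct Hor as [Hl|Hl]; [|subst j].
    - exact (IHk j Hl Pj).
    - apply Hno. exists k. split; auto. }
  apply (H (S n) n); auto.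
Qed.

Theorem mainTheorem7
  (Fm : Type) (Cn : (Fm -> Prop) -> (Fm -> Prop))
  (neg : Fm -> Fm) (or : Fm -> Fm -> Fm) (bot : Fm)
  (Hcount : countable_fm Fm)
  (Htar : tarskian Cn)
  (Hbool : boolean Cn neg or)
  (Hbot : is_bot Cn bot)
  (K : Fm -> Prop) (HK : theory Cn K)
  (delta : Fm -> (Fm -> Prop) -> Prop) (Hdelta : choice_function Cn neg delta)
  (C : Fm -> Prop) (HC : cleaving Cn or C) (HCK : sub C K)
  (pi : nat -> Fm) (Hpi : bijection_onto pi C) :
  choice_function Cn neg (delta_pi Cn neg or delta pi bot).
Proof.
  destruct Hdelta as [D1 [D2 [D3 D4]]].
  assert (Hspec : forall p, min_pi_spec Cn neg pi bot p (min_pi Cn neg pi bot p)).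
  { intros p. unfold min_pi. apply epsilon_spec.
    destruct (classic (exists i, meets Cn neg p (pi i))) as [[i Hi]|Hn].
    - destruct (least_exists (fun i => meets Cn neg p (pi i)) i Hi) as [k [Hk1 Hk2]].
      exists (pi k). left. exists k. auto.
    - exists bot. right. split; auto. intros i Hi. apply Hn. eauto. }
  unfold choice_function, delta_pi. split; [|split; [|split]].
  - intros p X H. eauto.
  - intros p. apply D2.
  - intros p Hp X HX.
    assert (Hnt : ~ Cn (@emptyF Fm) (or p (min_pi Cn neg pi bot p))).
    { destruct (Hspec p) as [[i [[Y [[HY1 HY2] [_ HY3]]] [_ ->]]] | [_ ->]]; intro Ht.
      - assert (HYo : Y (or p (pi i))).
        { apply (@th_in _ Cn); [apply HY1|]. apply (cut Htar _ _ _ Ht). intros _ []. }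
        destruct (or_prime Htar Hbool Y p (pi i) HY1 HYo); auto.
      - apply Hp. apply (cut Htar (single (or p bot))).
        + pose proof Htar as [Hext [Hmon Hid]].
          pose proof Hbool as [_ [_ [Hi1 [Hi2 Helim]]]].
          apply (cut Htar (addF (@emptyF Fm) (or p bot))).
          * apply Helim. apply Hext. right; reflexivity.
            apply (cut Htar (single bot)). apply Hbot; exact I.
            intros y ->. apply Hext. right; reflexivity.
          * apply addF_empty_single; auto.
        + intros y ->. exact Ht. }
    destruct (D3 _ Hnt X HX) as [HXc HXn]. split; auto.
    intro Xp. apply HXn. apply (@th_in _ Cn); [apply HXc|].
    pose proof Hbool as [_ [_ [Hi1 _]]]. apply Hi1.
    pose proof Htar as [Hext _]. apply Hext. exact Xp.
  - intros p q Hpq X.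
    assert (Hm : min_pi Cn neg pi bot p = min_pi Cn neg pi bot q).
    { assert (Hqp : equivF Cn q p) by (intro x; split; apply Hpq).
      assert (Hmeet : forall r, meets Cn neg p r <-> meets Cn neg q r).
      { intros r; split; intros [Y [[HY1 HY2] HY3]]; exists Y; split; auto; split; auto;
        intro HYq; apply HY2; eapply equiv_theory; eauto; apply HY1. }
      unfold min_pi. f_equal. apply functional_extensionality. intro r.
      apply propositional_extensionality. unfold min_pi_spec.
      split; intros [[i [H1 [H2 H3]]]|[H1 H2]].
      - left. exists i. repeat split; auto. apply Hmeet; auto.
        intros j Hj Hm. apply (H2 j Hj). apply Hmeet; auto.
      - right. split; auto. intros i Hi. apply (H1 i). apply Hmeet; auto.
      - left. exists i. repeat split; auto. apply Hmeet; auto.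
        intros j Hj Hm. apply (H2 j Hj). apply Hmeet; auto.
      - right. split; auto. intros i Hi. apply (H1 i). apply Hmeet; auto. }
    rewrite Hm. apply D4.
    set (m := min_pi Cn neg pi bot q).
    assert (Hqp : equivF Cn q p) by (intro x; split; apply Hpq).
    intro x; split; intro Hx.
    + apply (cut Htar _ _ _ Hx). intros y ->. apply (cn_or_equiv Htar Hbool); auto.
    + apply (cut Htar _ _ _ Hx). intros y ->. apply (cn_or_equiv Htar Hbool); auto.
Qed.
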